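(* Let $(X,d,\ll,\le,\tau)$ and $(Y,\widetilde d,\widetilde\ll,\widetilde\le,\widetilde\tau)$ be Lorentzian length spaces and let $f:X\to Y$ be a surjective distance homothetic map that is locally causally Lipschitz. If $(X,d,\ll,\le,\tau)$ is causally simple and $(Y,\widetilde d)$ is locally compact, then $(Y,\widetilde d,\widetilde\ll,\widetilde\le,\widetilde\tau)$ is causally simple.
   Context: A causal space $(X,\ll,\le)$ is a set $X$ with two transitive relations $\ll,\le$ such that $\le$ is reflexive and $x\ll y\Rightarrow x\le y$; write $p<q$ if $p\le q$ and $p\neq q$. Set $I^+(x)=\{y: x\ll y\}$, $I^-(x)=\{y: y\ll x\}$, $J^+(x)=\{y:x\le y\}$, $J^-(x)=\{y:y\le x\}$. A Lorentzian pre-length space $(X,d,\ll,\le,\tau)$ is a causal space together with a metric $d$ on $X$ and a function $\tau:X\times X\to[0,\infty]$ that is lower semicontinuous with respect to the topology of $d$, satisfies $\tau(x,z)\ge\tau(x,y)+\tau(y,z)$ whenever $x\le y\le z$, $\tau(x,y)=0$ if $x\not\le y$, and $\tau(x,y)>0\iff x\ll y$. All topological notions refer to the metric topology of $d$. A future directed causal (resp. timelike) curve is a non-constant Lipschitz map $\gamma:I\to X$ ($I\subset\mathbb R$ an interval) with $\gamma(s)\le\gamma(t)$ (resp. $\gamma(s)\ll\gamma(t)$) for all $s<t$. For a future directed causal $\gamma:[a,b]\to X$, $L_\tau(\gamma)=\inf\sum_{i=0}^{N-1}\tau(\gamma(t_i),\gamma(t_{i+1}))$ over all partitions $a=t_0<\dots<t_N=b$.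 The space is causally path connected if whenever $x\le y$ (resp. $x\ll y$) there is a future directed causal (resp. timelike) curve from $x$ to $y$. For open $U\subset X$, $p\le_U q$ means there is a future directed causal curve from $p$ to $q$ with image in $U$. A neighborhood $U$ is causally closed if whenever $p_n\le_U q_n$ with $p_n\to p\in U$, $q_n\to q\in U$, then $p\le_U q$; the space is locally causally closed if every point has a causally closed neighborhood. The space is localizable if every $x$ has a neighborhood $\Omega_x$ such that: (i) all causal curves contained in $\Omega_x$ have uniformly bounded $d$-length; (ii) there is a continuous $\omega_x:\Omega_x\times\Omega_x\to[0,\infty)$ such that $(\Omega_x,d|_{\Omega_x\times\Omega_x},\ll|_{\Omega_x},\le|_{\Omega_x},\omega_x)$ is a Lorentzian pre-length space, and $I^\pm(y)\cap\Omega_x\ne\emptyset$ for every $y\in\Omega_x$; (iii) for all $p,q\in\Omega_x$ with $p<q$ there is a future causal curve $\gamma_{p,q}$ from $p$ to $q$ with $L_\tau(\gamma_{p,q})\ge L_\tau(\gamma)$ for every future causal curve $\gamma\subset\Omega_x$ from $p$ to $q$, and $L_\tau(\gamma_{p,q})=\omega_x(p,q)$. A Lorentzian length space is a causally path connected, locally causally closed, localizable Lorentzian pre-length space with $\tau(x,y)=\sup\{L_\tau(\gamma):\gamma$ a future causal curve from $x$ to $y\}$. Causal: $x\le y$, $y\le x\Rightarrow x=y$. Causally simple: causal and $J^+(x)$, $J^-(x)$ closed for all $x$. A map $f:X\to Y$ is distance homothetic if there is $c>0$ with $\widetilde\tau(f(p),f(q))=c\,\tau(p,q)$ for all $p,q\in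 X$; it is locally causally Lipschitz if for every $x\in X$ there are an open $U\ni x$ and $M>0$ with $\widetilde d(f(x_1),f(x_2))\le M\,d(x_1,x_2)$ for all $x_1,x_2\in U$ with $x_1\le x_2$. *)

(* Defs.v *)
From Stdlib Require Import Reals List.
From Coquelicot Require Export Rbar Lub.
Open Scope R_scope.

Section LorentzianDefs.

Context {X : Type}.

Definition is_metric (d : X -> X -> R) : Prop :=
  (forall x y, 0 <= d x y) /\ (forall x, d x x = 0) /\
  (forall x y, d x y = 0 -> x = y) /\ (forall x y, d x y = d y x) /\
  (forall x y z, d x z <= d x y + d y z).

Definition open_set (d : X -> X -> R) (U : X -> Prop) : Prop :=
  forall x, U x -> exists e, 0 < e /\ forall y, d x y < e -> U y.

Definition closed_set (d : X -> X -> R) (A : X -> Prop) : Prop :=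
  open_set d (fun x => ~ A x).

Definition compact_set (d : X -> X -> R) (K : X -> Prop) : Prop :=
  forall (I : Type) (U : I -> X -> Prop),
    (forall i, open_set d (U i)) ->
    (forall x, K x -> exists i, U i x) ->
    exists l : list I, forall x, K x -> exists i, In i l /\ U i x.

Definition locally_compact (d : X -> X -> R) : Prop :=
  forall x, exists K, compact_set d K /\
    exists e, 0 < e /\ forall y, d x y < e -> K y.

Definition seq_cv (d : X -> X -> R) (p : nat -> X) (x : X) : Prop :=
  forall e, 0 < e -> exists N, forall n, (N <= n)%nat -> d (p n) x < e.

Fixpoint sumR (f : nat -> R) (n : nat) : R :=
  match n with O => 0 | S k => sumR f k + f k end.

Fixpoint sumRbar (f : nat -> Rbar) (n : nat) : Rbar :=
  match n with O => Finite 0 | S k => Rbar_plus (sumRbar f k) (f k) end.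

Definition partition (a b : R) (n : nat) (t : nat -> R) : Prop :=
  (0 < n)%nat /\ t O = a /\ t n = b /\ (forall i, (i < n)%nat -> t i < t (S i)).

Definition causal_space (ll le : X -> X -> Prop) : Prop :=
  (forall x y z, ll x y -> ll y z -> ll x z) /\
  (forall x y z, le x y -> le y z -> le x z) /\
  (forall x, le x x) /\
  (forall x y, ll x y -> le x y).

Definition lt_c (le : X -> X -> Prop) (p q : X) : Prop := le p q /\ p <> q.

Definition lsc_tau (d : X -> X -> R) (tau : X -> X -> Rbar) : Prop :=
  forall x y (r : R), Rbar_lt (Finite r) (tau x y) ->
    exists e, 0 < e /\ forall x' y', d x x' < e -> d y y' < e ->
      Rbar_lt (Finite r) (tau x' y').

Definition LPLS (d : X -> X -> R) (ll le : X -> X -> Prop)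
    (tau : X -> X -> Rbar) : Prop :=
  causal_space ll le /\ is_metric d /\
  (forall x y, Rbar_le (Finite 0) (tau x y)) /\
  lsc_tau d tau /\
  (forall x y z, le x y -> le y z ->
     Rbar_le (Rbar_plus (tau x y) (tau y z)) (tau x z)) /\
  (forall x y, ~ le x y -> tau x y = Finite 0) /\
  (forall x y, Rbar_lt (Finite 0) (tau x y) <-> ll x y).

(* a non-constant Lipschitz map [a,b] -> X with a < b (values outside [a,b] irrelevant) *)
Definition lipschitz_nonconst_on (d : X -> X -> R) (g : R -> X) (a b : R) : Prop :=
  a < b /\
  (exists L, forall s t, a <= s <= b -> a <= t <= b -> d (g s) (g t) <= L * Rabs (s - t)) /\
  (exists s t, a <= s <= b /\ a <= t <= b /\ g s <> g t).

Definition fd_causal_curve (d : X -> X -> R) (le : X -> X -> Prop)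
    (g : R -> X) (a b : R) : Prop :=
  lipschitz_nonconst_on d g a b /\
  forall s t, a <= s -> s < t -> t <= b -> le (g s) (g t).

Definition fd_timelike_curve (d : X -> X -> R) (ll : X -> X -> Prop)
    (g : R -> X) (a b : R) : Prop :=
  lipschitz_nonconst_on d g a b /\
  forall s t, a <= s -> s < t -> t <= b -> ll (g s) (g t).

Definition curve_in (U : X -> Prop) (g : R -> X) (a b : R) : Prop :=
  forall s, a <= s <= b -> U (g s).

Definition Ltau (tau : X -> X -> Rbar) (g : R -> X) (a b : R) : Rbar :=
  Rbar_glb (fun l => exists n t, partition a b n t /\
      l = sumRbar (fun i => tau (g (t i)) (g (t (S i)))) n).

Definition dlength_le (d : X -> X -> R) (g : R -> X) (a b C : R) : Prop :=
  forall n t, partition a b n t -> sumR (fun i => d (g (t i)) (g (t (S i)))) n <= C.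

Definition causally_path_connected (d : X -> X -> R) (ll le : X -> X -> Prop) : Prop :=
  (forall x y, lt_c le x y ->
     exists g a b, fd_causal_curve d le g a b /\ g a = x /\ g b = y) /\
  (forall x y, ll x y ->
     exists g a b, fd_timelike_curve d ll g a b /\ g a = x /\ g b = y).

Definition le_in (d : X -> X -> R) (le : X -> X -> Prop) (U : X -> Prop) (p q : X) : Prop :=
  p = q \/
  exists g a b, fd_causal_curve d le g a b /\ g a = p /\ g b = q /\ curve_in U g a b.

Definition causally_closed (d : X -> X -> R) (le : X -> X -> Prop) (U : X -> Prop) : Prop :=
  forall (p q : nat -> X) (p0 q0 : X),
    (forall n, le_in d le U (p n) (q n)) ->
    seq_cv d p p0 -> U p0 -> seq_cv d q q0 -> U q0 ->
    le_in d le U p0 q0.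

Definition locally_causally_closed (d : X -> X -> R) (le : X -> X -> Prop) : Prop :=
  forall x, exists U, open_set d U /\ U x /\ causally_closed d le U.

Definition LPLS_on (d : X -> X -> R) (ll le : X -> X -> Prop)
    (O : X -> Prop) (om : X -> X -> R) : Prop :=
  (forall x y, O x -> O y -> 0 <= om x y) /\
  (forall x y, O x -> O y -> forall e, 0 < e -> exists del, 0 < del /\
     forall x' y', O x' -> O y' -> d x x' < del -> d y y' < del ->
       Rabs (om x' y' - om x y) < e) /\
  (forall x y z, O x -> O y -> O z -> le x y -> le y z ->
     om x y + om y z <= om x z) /\
  (forall x y, O x -> O y -> ~ le x y -> om x y = 0) /\
  (forall x y, O x -> O y -> (0 < om x y <-> ll x y)).

Definition localizable (d : X -> X -> R) (ll le : X -> X -> Prop)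
    (tau : X -> X -> Rbar) : Prop :=
  forall x, exists (O : X -> Prop) (om : X -> X -> R),
    open_set d O /\ O x /\
    (exists C, forall g a b, fd_causal_curve d le g a b -> curve_in O g a b ->
        dlength_le d g a b C) /\
    LPLS_on d ll le O om /\
    (forall y, O y -> (exists z, O z /\ ll y z) /\ (exists z, O z /\ ll z y)) /\
    (forall p q, O p -> O q -> lt_c le p q ->
       exists g a b, fd_causal_curve d le g a b /\ g a = p /\ g b = q /\
         (forall h a' b', fd_causal_curve d le h a' b' -> h a' = p -> h b' = q ->
            curve_in O h a' b' -> Rbar_le (Ltau tau h a' b') (Ltau tau g a b)) /\
         Ltau tau g a b = Finite (om p q)).

(* tau(x,y) = sup of tau-lengths of f.d. causal curves from x to y (sup of the empty set = 0) *)
Definition tau_intrinsic (d : X -> X -> R) (le : X -> X -> Prop)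
    (tau : X -> X -> Rbar) : Prop :=
  forall x y, tau x y = Rbar_lub (fun l => l = Finite 0 \/
     exists g a b, fd_causal_curve d le g a b /\ g a = x /\ g b = y /\ l = Ltau tau g a b).

Definition LLS (d : X -> X -> R) (ll le : X -> X -> Prop) (tau : X -> X -> Rbar) : Prop :=
  LPLS d ll le tau /\ causally_path_connected d ll le /\
  locally_causally_closed d le /\ localizable d ll le tau /\ tau_intrinsic d le tau.

Definition causal (le : X -> X -> Prop) : Prop :=
  forall x y, le x y -> le y x -> x = y.

Definition causally_simple (d : X -> X -> R) (le : X -> X -> Prop) : Prop :=
  causal le /\ forall x, closed_set d (fun y => le x y) /\ closed_set d (fun y => le y x).

End LorentzianDefs.

Definition distance_homothetic {X Y : Type} (tau : X -> X -> Rbar)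
    (tau' : Y -> Y -> Rbar) (f : X -> Y) : Prop :=
  exists c, 0 < c /\ forall p q, tau' (f p) (f q) = Rbar_mult (Finite c) (tau p q).

Definition locally_causally_Lipschitz {X Y : Type} (d : X -> X -> R)
    (le : X -> X -> Prop) (d' : Y -> Y -> R) (f : X -> Y) : Prop :=
  forall x, exists U M, open_set d U /\ U x /\ 0 < M /\
    forall x1 x2, U x1 -> U x2 -> le x1 x2 -> d' (f x1) (f x2) <= M * d x1 x2.

(* Main.v *)
Require Import Defs.
From Stdlib Require Import Reals.
From Stdlib Require Import Lra Classical ClassicalEpsilon List Lia.
Open Scope R_scope.

Lemma real_ind (a b : R) (P : R -> Prop) : a <= b ->
  (forall s, a <= s <= b -> (forall u, a <= u < s -> P u) ->
     exists del, 0 < del /\ forall u, s <= u < s + del -> u <= b -> P u) ->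
  forall u, a <= u <= b -> P u.
Proof.
  intros Hab H.
  assert (Pa : P a).
  { destruct (H a) as [del [Hd Hu]]; [lra| intros; lra |]. apply Hu; lra. }
  set (E := fun t => a <= t <= b /\ forall u, a <= u <= t -> P u).
  assert (Hb : bound E). { exists b. intros t [Ht _]. lra. }
  assert (He : exists x, E x). { exists a. split; [lra|]. intros u Hu. replace u with a by lra. exact Pa. }
  destruct (completeness E Hb He) as [m [Hub Hlub]].
  assert (Ham : a <= m). { apply Hub. split; [lra|]. intros u Hu. replace u with a by lra. exact Pa. }
  assert (Hmb : m <= b). { apply Hlub. intros t [Ht _]. lra. }
  assert (C1 : forall u, a <= u < m -> P u).
  { intros u Hu. apply NNPP. intro HPu.
    assert (m <= u); [|lra]. apply Hlub. intros t [Ht Ht2].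
    destruct (Rle_lt_dec u t) as [h|h]; [|lra]. exfalso. apply HPu, Ht2. lra. }
  destruct (H m (conj Ham Hmb) C1) as [del [Hd Hu]].
  assert (Hm : m = b).
  { destruct (Req_dec m b) as [e|ne]; [exact e|exfalso].
    set (m' := Rmin b (m + del / 2)).
    assert (E m').
    { unfold m'. split. { split; [apply Rmin_case; lra | apply Rmin_l]. }
      intros u0 Hu0. destruct (Rlt_le_dec u0 m) as [h|h]. { apply C1; lra. }
      apply Hu. { split; [lra|]. assert (u0 <= m + del/2) by (eapply Rle_trans; [apply Hu0|apply Rmin_r]). lra. }
      eapply Rle_trans; [apply Hu0|apply Rmin_l]. }
    assert (m' <= m) by (apply Hub; auto).
    unfold m' in H1. revert H1. apply Rmin_case; lra. }
  intros u Hu1. destruct (Rlt_le_dec u m) as [h|h]. { apply C1; lra. }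
  apply Hu; lra.
Qed.

Lemma prev_pt (a s del : R) (P : R -> Prop) : a <= s -> 0 < del -> P a ->
  (forall u, a <= u < s -> P u) -> exists t, a <= t <= s /\ s - t < del /\ P t.
Proof.
  intros Has Hd Pa IH. destruct (Req_dec s a) as [e|ne].
  - exists a. repeat split; try lra. exact Pa.
  - exists (Rmax a (s - del/2)). repeat split.
    + apply Rmax_l.
    + apply Rmax_lub; lra.
    + pose proof (Rmax_r a (s - del/2)). lra.
    + apply IH. split; [apply Rmax_l|]. apply Rmax_lub_lt; lra.
Qed.

Section Metric.
Context {Z : Type} (dz : Z -> Z -> R) (Hm : is_metric dz).
Lemma dnn x y : 0 <= dz x y. Proof. apply Hm. Qed.
Lemma dxx x : dz x x = 0. Proof. apply Hm. Qed.
Lemma dsym x y : dz x y = dz y x. Proof. apply Hm. Qed.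
Lemma dtri x y z : dz x z <= dz x y + dz y z. Proof. apply Hm. Qed.
End Metric.

Lemma lip_glue {Z : Type} (dz : Z -> Z -> R) (Hm : is_metric dz) (g : R -> Z) (a b : R) :
  a <= b ->
  (forall s, a <= s <= b -> exists del M, 0 < del /\ forall s1 s2, a <= s1 <= b -> a <= s2 <= b ->
      Rabs (s1 - s) < del -> Rabs (s2 - s) < del -> dz (g s1) (g s2) <= M * Rabs (s1 - s2)) ->
  exists C, forall s1 s2, a <= s1 <= b -> a <= s2 <= b -> dz (g s1) (g s2) <= C * Rabs (s1 - s2).
Proof.
  intros Hab Hloc.
  set (P := fun t => exists C, 0 <= C /\ forall s1 s2, a <= s1 <= t -> a <= s2 <= t ->
              dz (g s1) (g s2) <= C * Rabs (s1 - s2)).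
  assert (Pa : P a).
  { exists 0. split; [lra|]. intros s1 s2 H1 H2. replace s1 with a by lra. replace s2 with a by lra.
    rewrite (dxx dz Hm). lra. }
  assert (HP : forall u, a <= u <= b -> P u).
  { apply real_ind; [exact Hab|]. intros s Hs IH.
    destruct (Hloc s Hs) as [del [M [Hd HM]]].
    destruct (prev_pt a s del P (proj1 Hs) Hd Pa IH) as [t [Ht [Hst [C0 [HC0 HPt]]]]].
    exists del. split; [exact Hd|]. intros u Hu Hub.
    set (C := Rmax C0 (Rmax M 0)).
    assert (HC0C : C0 <= C) by apply Rmax_l.
    assert (HMC : M <= C) by (eapply Rle_trans; [apply Rmax_l|apply Rmax_r]).
    assert (HC : 0 <= C) by (eapply Rle_trans; [|apply Rmax_r]; apply Rmax_r).
    exists C. split; [exact HC|].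
    assert (Hmain : forall s1 s2, a <= s1 <= u -> a <= s2 <= u -> s1 <= s2 ->
              dz (g s1) (g s2) <= C * Rabs (s1 - s2)).
    { intros s1 s2 H1 H2 H12. rewrite Rabs_left1 by lra.
      destruct (Rle_lt_dec s2 t) as [h2|h2].
      - eapply Rle_trans. apply HPt; lra. rewrite Rabs_left1 by lra.
        apply Rmult_le_compat_r; lra.
      - destruct (Rle_lt_dec t s1) as [h1|h1].
        + eapply Rle_trans. apply HM; try lra.
          * apply Rabs_def1; lra.
          * apply Rabs_def1; lra.
          * rewrite Rabs_left1 by lra. apply Rmult_le_compat_r; lra.
        + eapply Rle_trans. apply (dtri dz Hm) with (y := g t).
          assert (A1 : dz (g s1) (g t) <= C0 * (t - s1)).
          { replace (t - s1) with (Rabs (s1 - t)) by (rewrite Rabs_left1; lra). apply HPt; lra. }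
          assert (A2 : dz (g t) (g s2) <= M * (s2 - t)).
          { replace (s2 - t) with (Rabs (t - s2)) by (rewrite Rabs_left1; lra). apply HM; try lra.
            apply Rabs_def1; lra. apply Rabs_def1; lra. }
          assert (C0 * (t - s1) <= C * (t - s1)) by (apply Rmult_le_compat_r; lra).
          assert (M * (s2 - t) <= C * (s2 - t)) by (apply Rmult_le_compat_r; lra).
          lra. }
    intros s1 s2 H1 H2. destruct (Rle_lt_dec s1 s2) as [h|h].
    + apply Hmain; lra.
    + rewrite (dsym dz Hm), Rabs_minus_sym. apply Hmain; lra. }
  destruct (HP b) as [C [_ HC]]; [lra|]. exists C. exact HC.
Qed.

Lemma Rabs_le_between x y : Rabs x <= y -> - y <= x <= y.
Proof. intros H. pose proof (Rle_abs x). pose proof (Rle_abs (-x)). rewrite Rabs_Ropp in H1. lra. Qed.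

Lemma annulus (h : R -> R) (a b c1 c2 s0 C : R) :
  a <= s0 <= b -> c1 < c2 -> h a < c1 -> c2 <= h s0 ->
  (forall s t, a <= s <= b -> a <= t <= b -> Rabs (h s - h t) <= C * Rabs (s - t)) ->
  exists s, a <= s <= b /\ c1 <= h s <= c2.
Proof.
  intros Hs0 Hc Ha Hh0 Hlip. apply NNPP. intro Hno.
  assert (Hlip' : forall s t, a <= s <= b -> a <= t <= b -> Rabs (h s - h t) <= Rabs C * Rabs (s - t)).
  { intros s t Hs Ht. eapply Rle_trans. apply Hlip; auto. apply Rmult_le_compat_r. apply Rabs_pos. apply Rle_abs. }
  assert (HP : forall u, a <= u <= b -> h u < c1).
  { apply real_ind; [lra|]. intros s Hs IH.
    assert (Hhs : h s < c1).
    { destruct (Req_dec s a) as [e|ne]. { subst. exact Ha. }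
      destruct (Rlt_le_dec (h s) c1) as [l|l]; [exact l|exfalso].
      assert (Hgt : c2 < h s).
      { destruct (Rlt_le_dec c2 (h s)) as [l2|l2]; [exact l2|]. exfalso. apply Hno. exists s. split; [exact Hs|lra]. }
      set (del := (h s - c1) / (Rabs C + 1)).
      assert (Hd : 0 < del). { unfold del. apply Rdiv_lt_0_compat. lra. pose proof (Rabs_pos C). lra. }
      destruct (prev_pt a s del (fun u => h u < c1) (proj1 Hs) Hd Ha IH) as [t [Ht [Hst Pt]]].
      assert (Hlt : Rabs (h t - h s) <= Rabs C * Rabs (t - s)) by (apply Hlip'; lra).
      rewrite (Rabs_left1 (t - s)) in Hlt by lra.
      assert (Rabs C * (- (t - s)) <= Rabs C * del) by (apply Rmult_le_compat_l; [apply Rabs_pos|lra]).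
      assert (Rabs C * del < h s - c1).
      { unfold del. pose proof (Rabs_pos C). apply (Rmult_lt_reg_r (Rabs C + 1)); [lra|].
        field_simplify; [|lra]. nra. }
      apply Rabs_le_between in Hlt. lra. }
    set (del := (c1 - h s) / (Rabs C + 1)).
    assert (Hd : 0 < del). { unfold del. apply Rdiv_lt_0_compat. lra. pose proof (Rabs_pos C). lra. }
    exists del. split; [exact Hd|]. intros u Hu Hub.
    assert (Hlt : Rabs (h u - h s) <= Rabs C * Rabs (u - s)) by (apply Hlip'; lra).
    rewrite (Rabs_right (u - s)) in Hlt by lra.
    assert (Rabs C * (u - s) <= Rabs C * del) by (apply Rmult_le_compat_l; [apply Rabs_pos|lra]).
    assert (Rabs C * del < c1 - h s).
    { unfold del. pose proof (Rabs_pos C). apply (Rmult_lt_reg_r (Rabs C + 1)); [lra|].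
      field_simplify; [|lra]. nra. }
    apply Rabs_le_between in Hlt. lra. }
  specialize (HP s0 Hs0). lra.
Qed.

Fixpoint maxN (l : list nat) : nat := match l with nil => O | cons n l' => Nat.max n (maxN l') end.
Lemma maxN_ge l n : In n l -> (n <= maxN l)%nat.
Proof. induction l; simpl; intros H; [contradiction|]. destruct H; subst; lia || (specialize (IHl H); lia). Qed.

Lemma cluster {Z : Type} (dz : Z -> Z -> R) (Hm : is_metric dz) (K : Z -> Prop) :
  compact_set dz K -> forall (y : nat -> Z), (forall j, K (y j)) ->
  exists y0, K y0 /\ forall e, 0 < e -> forall N, exists j, (N <= j)%nat /\ dz (y j) y0 < e.
Proof.
  intros HK y Hy. apply NNPP. intro Hno.
  set (Good := fun (i : Z * R * nat) => let '(z, e, N) := i in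
                 0 < e /\ forall j, (N <= j)%nat -> e <= dz (y j) z).
  set (U := fun (i : Z * R * nat) (w : Z) => Good i /\ dz (fst (fst i)) w < snd (fst i)).
  destruct (HK (Z * R * nat)%type U) as [l Hl].
  - intros [[z e] N] w [HG Hw]. simpl in Hw. exists (e - dz z w). split; [lra|].
    intros v Hv. split; [exact HG|]. simpl. pose proof (dtri dz Hm z w v). lra.
  - intros z Hz.
    assert (H1 : exists e N, 0 < e /\ forall j, (N <= j)%nat -> e <= dz (y j) z).
    { apply NNPP. intro H2. apply Hno. exists z. split; [exact Hz|].
      intros e He N. apply NNPP. intro H3. apply H2. exists e, N. split; [exact He|].
      intros j Hj. apply Rnot_lt_le. intro H4. apply H3. exists j. auto. }
    destruct H1 as [e [N [He HN]]]. exists (z, e, N). split. { simpl. auto. }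
    simpl. rewrite (dxx dz Hm). exact He.
  - set (M := maxN (map snd l)).
    destruct (Hl (y M) (Hy M)) as [[[z e] N] [Hin [HG Hw]]].
    simpl in HG, Hw. destruct HG as [He HN].
    assert (HNM : (N <= M)%nat). { apply maxN_ge. change N with (snd (z, e, N)). apply in_map. exact Hin. }
    specialize (HN M HNM). rewrite (dsym dz Hm) in HN. lra.
Qed.

Lemma Rbar_mult_pos_iff (c : R) (x : Rbar) : 0 < c ->
  (Rbar_lt (Finite 0) (Rbar_mult (Finite c) x) <-> Rbar_lt (Finite 0) x).
Proof.
  intros Hc. destruct x as [r| |]; unfold Rbar_mult; simpl.
  - split; intro H. + destruct (Rle_lt_dec r 0); [|lra]. nra. + nra.
  - destruct (Rle_dec 0 c) as [H|H]; [|lra].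
    destruct (Rle_lt_or_eq_dec 0 c H); simpl; [tauto|lra].
  - destruct (Rle_dec 0 c) as [H|H]; [|lra].
    destruct (Rle_lt_or_eq_dec 0 c H); simpl; [tauto|lra].
Qed.

Lemma Rbar_plus_pos (x y : Rbar) : Rbar_lt (Finite 0) x -> Rbar_le (Finite 0) y ->
  Rbar_lt (Finite 0) (Rbar_plus x y).
Proof. destruct x as [a| |]; destruct y as [b| |]; simpl; intros; try lra; auto. Qed.

Lemma Rbar_plus_pos' (x y : Rbar) : Rbar_le (Finite 0) x -> Rbar_lt (Finite 0) y ->
  Rbar_lt (Finite 0) (Rbar_plus x y).
Proof. destruct x as [a| |]; destruct y as [b| |]; simpl; intros; try lra; auto. Qed.

Lemma arch_inv (e : R) : 0 < e -> exists N : nat, / (INR N + 1) < e.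
Proof.
  intros He. destruct (archimed_cor1 e He) as [N [HN HN0]]. exists N.
  eapply Rle_lt_trans; [|exact HN]. apply Rinv_le_contravar.
  apply lt_0_INR; exact HN0. lra.
Qed.

Lemma inv_mono (N j : nat) : (N <= j)%nat -> / (INR j + 1) <= / (INR N + 1).
Proof.
  intros H. apply Rinv_le_contravar. pose proof (pos_INR N); lra. apply le_INR in H. lra.
Qed.

Lemma inv_pos (n : nat) : 0 < / (INR n + 1).
Proof. apply Rinv_0_lt_compat. pose proof (pos_INR n); lra. Qed.

Lemma lip_abs {Z : Type} (dz : Z -> Z -> R) (g : R -> Z) (a b L : R) :
  (forall s t, a <= s <= b -> a <= t <= b -> dz (g s) (g t) <= L * Rabs (s - t)) ->
  forall s t, a <= s <= b -> a <= t <= b -> dz (g s) (g t) <= Rabs L * Rabs (s - t).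
Proof.
  intros H s t Hs Ht. eapply Rle_trans. apply H; auto.
  apply Rmult_le_compat_r. apply Rabs_pos. apply Rle_abs.
Qed.

Lemma small_step (L e : R) : 0 < e -> Rabs L * (e / (Rabs L + 1)) < e.
Proof.
  intros He. pose proof (Rabs_pos L).
  apply (Rmult_lt_reg_r (Rabs L + 1)); [lra|]. field_simplify; [|lra]. nra.
Qed.

Lemma choice_nat {A : Type} (P : nat -> A -> Prop) : (forall n, exists a, P n a) -> exists F, forall n, P n (F n).
Proof.
  intros H. exists (fun n => proj1_sig (constructive_indefinite_description _ (H n))).
  intro n. exact (proj2_sig (constructive_indefinite_description _ (H n))).
Qed.

Section Main.
Variables (X Y : Type) (d : X -> X -> R) (ll le : X -> X -> Prop) (tau : X -> X -> Rbar)
  (d' : Y -> Y -> R) (ll' le' : Y -> Y -> Prop) (tau' : Y -> Y -> Rbar) (f : X -> Y) (c : R).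
Hypothesis dX : is_metric d.
Hypothesis dY : is_metric d'.
Hypothesis csX : causal_space ll le.
Hypothesis csY : causal_space ll' le'.
Hypothesis lscX : lsc_tau d tau.
Hypothesis lscY : lsc_tau d' tau'.
Hypothesis nnX : forall x y, Rbar_le (Finite 0) (tau x y).
Hypothesis nnY : forall x y, Rbar_le (Finite 0) (tau' x y).
Hypothesis revX : forall x y z, le x y -> le y z -> Rbar_le (Rbar_plus (tau x y) (tau y z)) (tau x z).
Hypothesis revY : forall x y z, le' x y -> le' y z -> Rbar_le (Rbar_plus (tau' x y) (tau' y z)) (tau' x z).
Hypothesis posX : forall x y, Rbar_lt (Finite 0) (tau x y) <-> ll x y.
Hypothesis posY : forall x y, Rbar_lt (Finite 0) (tau' x y) <-> ll' x y.
Hypothesis pcX : causally_path_connected d ll le.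
Hypothesis locX : localizable d ll le tau.
Hypothesis lccY : locally_causally_closed d' le'.
Hypothesis surj : forall y, exists x, f x = y.
Hypothesis cpos : 0 < c.
Hypothesis hom : forall p q, tau' (f p) (f q) = Rbar_mult (Finite c) (tau p q).
Hypothesis lipf : locally_causally_Lipschitz d le d' f.
Hypothesis simpX : causally_simple d le.
Hypothesis lcY : locally_compact d'.

Lemma llX_le x y : ll x y -> le x y. Proof. destruct csX as (_&_&_&H). apply H. Qed.
Lemma llY_le x y : ll' x y -> le' x y. Proof. destruct csY as (_&_&_&H). apply H. Qed.
Lemma llX_tr x y z : ll x y -> ll y z -> ll x z. Proof. destruct csX as (H&_&_&_). apply H. Qed.
Lemma llY_tr x y z : ll' x y -> ll' y z -> ll' x z. Proof. destruct csY as (H&_&_&_). apply H. Qed.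
Lemma leX_tr x y z : le x y -> le y z -> le x z. Proof. destruct csX as (_&H&_&_). apply H. Qed.
Lemma leY_tr x y z : le' x y -> le' y z -> le' x z. Proof. destruct csY as (_&H&_&_). apply H. Qed.
Lemma leX_refl x : le x x. Proof. destruct csX as (_&_&H&_). apply H. Qed.
Lemma leY_refl x : le' x x. Proof. destruct csY as (_&_&H&_). apply H. Qed.

Lemma pushupX a b z : ll a b -> le b z -> ll a z.
Proof.
  intros H1 H2. apply posX. eapply Rbar_lt_le_trans; [|apply revX; [apply llX_le; exact H1|exact H2]].
  apply Rbar_plus_pos; [apply posX; exact H1|apply nnX].
Qed.
Lemma pushdownX a b z : le a b -> ll b z -> ll a z.
Proof.
  intros H1 H2. apply posX. eapply Rbar_lt_le_trans; [|apply revX; [exact H1|apply llX_le; exact H2]].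
  apply Rbar_plus_pos'; [apply nnX|apply posX; exact H2].
Qed.
Lemma pushupY a b z : ll' a b -> le' b z -> ll' a z.
Proof.
  intros H1 H2. apply posY. eapply Rbar_lt_le_trans; [|apply revY; [apply llY_le; exact H1|exact H2]].
  apply Rbar_plus_pos; [apply posY; exact H1|apply nnY].
Qed.
Lemma pushdownY a b z : le' a b -> ll' b z -> ll' a z.
Proof.
  intros H1 H2. apply posY. eapply Rbar_lt_le_trans; [|apply revY; [exact H1|apply llY_le; exact H2]].
  apply Rbar_plus_pos'; [apply nnY|apply posY; exact H2].
Qed.

Lemma hom_ll x y : ll x y <-> ll' (f x) (f y).
Proof. rewrite <- posX, <- posY, hom. symmetry. apply Rbar_mult_pos_iff. exact cpos. Qed.

Lemma causalX x y : le x y -> le y x -> x = y.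
Proof. destruct simpX as [H _]. apply H. Qed.

Lemma no_ll_self x : ~ ll x x.
Proof.
  intro H. destruct pcX as [_ Ht].
  destruct (Ht x x H) as [g [a [b [[[Hab [_ [s [t [Hs [Ht' Hne]]]]]] Hmon] [Ha Hb]]]]].
  assert (Hc : forall u, a <= u <= b -> g u = x).
  { intros u Hu. destruct (Req_dec u a) as [e|n1]. { rewrite e. exact Ha. }
    destruct (Req_dec u b) as [e|n2]. { rewrite e. exact Hb. }
    symmetry. apply causalX.
    - rewrite <- Ha. apply llX_le, Hmon; lra.
    - rewrite <- Hb. apply llX_le, Hmon; lra. }
  apply Hne. rewrite (Hc s Hs), (Hc t Ht'). reflexivity.
Qed.

Lemma f_ne_ll u w : ll u w -> f u <> f w.
Proof.
  intros H E. apply hom_ll in H. rewrite E in H. apply hom_ll in H. exact (no_ll_self w H).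
Qed.

Lemma approx_past p e : 0 < e -> exists z, ll z p /\ d z p < e.
Proof.
  intros He. destruct (locX p) as [O [om [HO [HOp [Hi [HLP [Hne Hiii]]]]]]].
  destruct (Hne p HOp) as [_ [z [_ Hz]]].
  destruct pcX as [_ Ht]. destruct (Ht z p Hz) as [g [a [b [[[Hab [[L HL] _]] Hmon] [Ha Hb]]]]].
  set (del := e / (Rabs L + 1)).
  assert (Hd : 0 < del). { unfold del. apply Rdiv_lt_0_compat; [lra|]. pose proof (Rabs_pos L); lra. }
  set (s := Rmax a (b - del / 2)).
  assert (Hs1 : a <= s) by apply Rmax_l.
  assert (Hs2 : s < b) by (apply Rmax_lub_lt; lra).
  assert (Hs3 : b - s <= del / 2) by (pose proof (Rmax_r a (b - del/2)); unfold s; lra).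
  exists (g s). split.
  - rewrite <- Hb. apply Hmon; lra.
  - rewrite <- Hb. eapply Rle_lt_trans. apply (lip_abs d g a b L HL). all: try lra.
    rewrite (Rabs_left1 (_ - _)) by lra.
    pose proof (small_step L e He). fold del in H.
    assert (Rabs L * - (s - b) <= Rabs L * del) by (apply Rmult_le_compat_l; [apply Rabs_pos|lra]).
    lra.
Qed.

Lemma approx_fut p e : 0 < e -> exists w, ll p w /\ d p w < e.
Proof.
  intros He. destruct (locX p) as [O [om [HO [HOp [Hi [HLP [Hne Hiii]]]]]]].
  destruct (Hne p HOp) as [[z [_ Hz]] _].
  destruct pcX as [_ Ht]. destruct (Ht p z Hz) as [g [a [b [[[Hab [[L HL] _]] Hmon] [Ha Hb]]]]].
  set (del := e / (Rabs L + 1)).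
  assert (Hd : 0 < del). { unfold del. apply Rdiv_lt_0_compat; [lra|]. pose proof (Rabs_pos L); lra. }
  set (s := Rmin b (a + del / 2)).
  assert (Hs1 : s <= b) by apply Rmin_l.
  assert (Hs2 : a < s) by (apply Rmin_glb_lt; lra).
  assert (Hs3 : s - a <= del / 2) by (pose proof (Rmin_r b (a + del/2)); unfold s; lra).
  exists (g s). split.
  - rewrite <- Ha. apply Hmon; lra.
  - rewrite <- Ha. eapply Rle_lt_trans. apply (lip_abs d g a b L HL); lra.
    rewrite (Rabs_left1 (_ - _)) by lra.
    pose proof (small_step L e He). fold del in H.
    assert (Rabs L * - (a - s) <= Rabs L * del) by (apply Rmult_le_compat_l; [apply Rabs_pos|lra]).
    lra.
Qed.

Lemma past_incl a b : (forall z, ll z a -> le z b) -> le a b.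
Proof.
  intros H. apply NNPP. intro Hn. destruct simpX as [_ Hcl]. destruct (Hcl b) as [_ Hclm].
  destruct (Hclm a Hn) as [e [He Hball]]. destruct (approx_past a e He) as [z [Hz Hd]].
  apply (Hball z). rewrite (dsym d dX). exact Hd. apply H; exact Hz.
Qed.

Lemma fut_cl a b : (forall w, ll b w -> le a w) -> le a b.
Proof.
  intros H. apply NNPP. intro Hn. destruct simpX as [_ Hcl]. destruct (Hcl a) as [Hclp _].
  destruct (Hclp b Hn) as [e [He Hball]]. destruct (approx_fut b e He) as [w [Hw Hd]].
  apply (Hball w). exact Hd. apply H; exact Hw.
Qed.

Lemma CONT x eps : 0 < eps -> exists del, 0 < del /\ forall x', (le x x' \/ le x' x) -> d x x' < del ->
  d' (f x) (f x') < eps.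
Proof.
  intros He. destruct (lipf x) as [U [M [HU [HUx [HM Hl]]]]]. destruct (HU x HUx) as [e [Hee HUe]].
  exists (Rmin e (eps / M)). split. { apply Rmin_glb_lt; [lra|]. apply Rdiv_lt_0_compat; lra. }
  intros x' Hrel Hd.
  assert (Hd1 : d x x' < e) by (eapply Rlt_le_trans; [exact Hd|apply Rmin_l]).
  assert (Hd2 : d x x' < eps / M) by (eapply Rlt_le_trans; [exact Hd|apply Rmin_r]).
  assert (HUx' : U x') by (apply HUe; exact Hd1).
  assert (Hb : d' (f x) (f x') <= M * d x x').
  { destruct Hrel as [Hr|Hr].
    - apply Hl; auto.
    - rewrite (dsym d' dY), (dsym d dX). apply Hl; auto. }
  assert (M * d x x' < M * (eps / M)) by (apply Rmult_lt_compat_l; lra).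
  replace (M * (eps / M)) with eps in H by (field; lra). lra.
Qed.

Lemma mono_le g a b : fd_causal_curve d le g a b -> forall s t, a <= s -> s <= t -> t <= b -> le (g s) (g t).
Proof.
  intros [_ Hm] s t H1 H2 H3. destruct (Req_dec s t) as [e|n]. { subst. apply leX_refl. }
  apply Hm; lra.
Qed.

Lemma tl_causal g a b : fd_timelike_curve d ll g a b -> fd_causal_curve d le g a b.
Proof. intros [H1 H2]. split; [exact H1|]. intros; apply llX_le; auto. Qed.

Lemma f_comp_lip g a b : fd_causal_curve d le g a b ->
  exists C, forall s1 s2, a <= s1 <= b -> a <= s2 <= b -> d' (f (g s1)) (f (g s2)) <= C * Rabs (s1 - s2).
Proof.
  intros Hg. pose proof Hg as [[Hab [[L HL] _]] Hmon].
  apply (lip_glue d' dY (fun s => f (g s)) a b); [lra|].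
  intros s Hs. destruct (lipf (g s)) as [U [M [HU [HUx [HM Hl]]]]].
  destruct (HU (g s) HUx) as [e [He HUe]].
  exists (e / (Rabs L + 1)), (M * Rabs L). split.
  { apply Rdiv_lt_0_compat; [lra|]. pose proof (Rabs_pos L); lra. }
  assert (Hin : forall s1, a <= s1 <= b -> Rabs (s1 - s) < e / (Rabs L + 1) -> U (g s1)).
  { intros s1 H1 H2. apply HUe. eapply Rle_lt_trans. apply (lip_abs d g a b L HL); auto.
    rewrite Rabs_minus_sym.
    assert (Rabs L * Rabs (s1 - s) <= Rabs L * (e / (Rabs L + 1))) by (apply Rmult_le_compat_l; [apply Rabs_pos|lra]).
    pose proof (small_step L e He). lra. }
  assert (Hmain : forall s1 s2, a <= s1 <= b -> a <= s2 <= b -> s1 <= s2 ->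
      U (g s1) -> U (g s2) -> d' (f (g s1)) (f (g s2)) <= M * Rabs L * Rabs (s1 - s2)).
  { intros s1 s2 H1 H2 H12 U1 U2. eapply Rle_trans. apply Hl; auto. apply (mono_le g a b Hg); lra.
    rewrite Rmult_assoc. apply Rmult_le_compat_l; [lra|]. apply (lip_abs d g a b L HL); auto. }
  intros s1 s2 H1 H2 H3 H4. destruct (Rle_lt_dec s1 s2) as [h|h].
  - apply Hmain; auto.
  - rewrite (dsym d' dY), (Rabs_minus_sym s1 s2). apply Hmain; auto; lra.
Qed.

Lemma LOC p eps K : 0 < eps -> compact_set d' K -> (forall y, d' (f p) y <= eps -> K y) ->
  exists eta, 0 < eta /\ forall g a b, fd_causal_curve d le g a b -> ll (g a) p -> ll p (g b) ->
    d (g a) p < eta -> d (g b) p < eta -> forall s, a <= s <= b -> d' (f p) (f (g s)) < eps.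
Proof.
  intros He HK HKb. apply NNPP. intro Hno.
  destruct (CONT p (eps/2)) as [d0 [Hd0 Hc0]]; [lra|].
  assert (Hbad : forall j : nat, exists t : X * X * X,
     ll (fst (fst t)) p /\ ll p (snd (fst t)) /\ le (fst (fst t)) (snd t) /\ le (snd t) (snd (fst t)) /\
       d (fst (fst t)) p < / (INR j + 1) /\ d (snd (fst t)) p < / (INR j + 1) /\
       eps/2 <= d' (f p) (f (snd t)) <= eps).
  { intro j. apply NNPP. intro Hn. apply Hno. exists (Rmin d0 (/ (INR j + 1))). split.
    { apply Rmin_glb_lt; [exact Hd0| apply inv_pos]. }
    intros g a b Hg Ha Hb Hda Hdb s Hs. apply Rnot_le_lt. intro Hge.
    pose proof Hg as [[Hab _] _].
    destruct (f_comp_lip g a b Hg) as [C HC].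
    destruct (annulus (fun s => d' (f p) (f (g s))) a b (eps/2) eps s C) as [s' [Hs' Hann]].
    - exact Hs.
    - lra.
    - apply Hc0. right. apply llX_le. exact Ha. rewrite (dsym d dX). eapply Rlt_le_trans; [exact Hda|apply Rmin_l].
    - exact Hge.
    - intros s1 s2 H1 H2.
      eapply Rle_trans; [|apply HC; auto].
      pose proof (dtri d' dY (f p) (f (g s1)) (f (g s2))) as T1.
      pose proof (dtri d' dY (f p) (f (g s2)) (f (g s1))) as T2.
      rewrite (dsym d' dY (f (g s2)) (f (g s1))) in T2.
      apply Rabs_le. lra.
    - apply Hn. exists (g a, g b, g s'). simpl. repeat split.
      + exact Ha.
      + exact Hb.
      + apply (mono_le g a b Hg); lra.
      + apply (mono_le g a b Hg); lra.
      + eapply Rlt_le_trans; [exact Hda|apply Rmin_r].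
      + eapply Rlt_le_trans; [exact Hdb|apply Rmin_r].
      + simpl in Hann. lra.
      + simpl in Hann. lra. }
  destruct (choice_nat _ Hbad) as [F HF].
  set (u := fun j => fst (fst (F j))). set (w := fun j => snd (fst (F j))). set (r := fun j => snd (F j)).
  assert (HKr : forall j, K (f (r j))). { intro j. apply HKb. apply (HF j). }
  destruct (cluster d' dY K HK (fun j => f (r j)) HKr) as [y0 [HKy0 Hcl]].
  destruct (surj y0) as [r0 Hr0]. rewrite <- Hr0 in Hcl.
  assert (H1 : le p r0).
  { apply past_incl. intros z Hz. apply fut_cl. intros w' Hw'. apply llX_le.
    destruct (lscX z p 0) as [e1 [He1 L1]]. { apply posX; exact Hz. }
    destruct (lscY (f r0) (f w') 0) as [e2 [He2 L2]]. { apply posY, hom_ll; exact Hw'. }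
    destruct (arch_inv e1 He1) as [N HN].
    destruct (Hcl e2 He2 N) as [j [Hj Hdj]].
    destruct (HF j) as [Hu [_ [Hur [_ [Hdu _]]]]].
    assert (Hzu : ll z (u j)).
    { apply posX. apply L1. rewrite (dxx d dX); lra. rewrite (dsym d dX).
      pose proof (inv_mono N j Hj). unfold u, w, r in *. lra. }
    assert (Hr : ll z (r j)) by (apply (pushupX z (u j) (r j) Hzu Hur)).
    apply hom_ll. apply llY_tr with (f (r j)). apply hom_ll; exact Hr.
    apply posY. apply L2. rewrite (dsym d' dY); exact Hdj. rewrite (dxx d' dY); lra. }
  assert (H2 : le r0 p).
  { apply fut_cl. intros w' Hw'. apply past_incl. intros z' Hz'. apply llX_le.
    destruct (lscY (f z') (f r0) 0) as [e2 [He2 L2]]. { apply posY, hom_ll; exact Hz'. }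
    destruct (lscX p w' 0) as [e1 [He1 L1]]. { apply posX; exact Hw'. }
    destruct (arch_inv e1 He1) as [N HN].
    destruct (Hcl e2 He2 N) as [j [Hj Hdj]].
    destruct (HF j) as [_ [Hw [_ [Hrw [_ [Hdw _]]]]]].
    assert (Hww : ll (w j) w').
    { apply posX. apply L1. rewrite (dsym d dX). pose proof (inv_mono N j Hj). unfold u, w, r in *. lra.
      rewrite (dxx d dX); lra. }
    assert (Hr : ll (r j) w') by (apply (pushdownX (r j) (w j) w' Hrw Hww)).
    apply hom_ll. apply llY_tr with (f (r j)).
    - apply posY. apply L2. rewrite (dxx d' dY); lra. rewrite (dsym d' dY); exact Hdj.
    - apply hom_ll; exact Hr. }
  assert (E : p = r0) by (apply causalX; auto).
  rewrite <- E in Hcl. assert (He2 : 0 < eps/2) by lra. destruct (Hcl (eps/2) He2 O) as [j [_ Hj]].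
  destruct (HF j) as [_ [_ [_ [_ [_ [_ Hann]]]]]].
  rewrite (dsym d' dY) in Hj. unfold r in Hj. lra.
Qed.

Lemma le_in_le U a b : le_in d' le' U a b -> le' a b.
Proof.
  intros [E | [g [a0 [b0 [[[Hab _] Hm] [Ha [Hb _]]]]]]].
  - rewrite E. apply leY_refl.
  - rewrite <- Ha, <- Hb. apply Hm; lra.
Qed.

Lemma LL p : exists eta, 0 < eta /\ forall q1 q2, le q1 p -> le p q2 -> d q1 p < eta -> d q2 p < eta ->
  le' (f q1) (f q2).
Proof.
  destruct (lccY (f p)) as [V [HV [HVp HVcc]]].
  destruct (HV (f p) HVp) as [eV [HeV HVb]].
  destruct (lcY (f p)) as [K [HK [eK [HeK HKb]]]].
  assert (Hm : 0 < Rmin eV eK) by (apply Rmin_glb_lt; lra).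
  set (eps := Rmin eV eK / 2).
  assert (Heps : 0 < eps) by (unfold eps; lra).
  assert (HeV' : eps < eV) by (pose proof (Rmin_l eV eK); unfold eps; lra).
  assert (HeK' : eps < eK) by (pose proof (Rmin_r eV eK); unfold eps; lra).
  destruct (LOC p eps K Heps HK) as [eta [Heta Hloc]].
  { intros y Hy. apply HKb. lra. }
  destruct (CONT p eps Heps) as [dp [Hdp Hcp]].
  exists (Rmin (eta/2) dp). split. { apply Rmin_glb_lt; lra. }
  intros q1 q2 H1 H2 Hd1 Hd2.
  assert (Hd1a : d q1 p < eta/2) by (eapply Rlt_le_trans; [exact Hd1|apply Rmin_l]).
  assert (Hd1b : d q1 p < dp) by (eapply Rlt_le_trans; [exact Hd1|apply Rmin_r]).
  assert (Hd2a : d q2 p < eta/2) by (eapply Rlt_le_trans; [exact Hd2|apply Rmin_l]).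
  assert (Hd2b : d q2 p < dp) by (eapply Rlt_le_trans; [exact Hd2|apply Rmin_r]).
  assert (Hseq : forall n : nat, exists t : X * X, ll (fst t) q1 /\ d (fst t) q1 < Rmin (/(INR n+1)) (eta/2) /\
       ll q2 (snd t) /\ d q2 (snd t) < Rmin (/(INR n + 1)) (eta/2)).
  { intro n. assert (Hpos : 0 < Rmin (/(INR n+1)) (eta/2)) by (apply Rmin_glb_lt; [apply inv_pos|lra]).
    destruct (approx_past q1 _ Hpos) as [u [Hu Hdu]].
    destruct (approx_fut q2 _ Hpos) as [w [Hw Hdw]].
    exists (u, w). simpl. auto. }
  destruct (choice_nat _ Hseq) as [F HF].
  apply (le_in_le V).
  apply (HVcc (fun n => f (fst (F n))) (fun n => f (snd (F n)))).
  - intro n. destruct (HF n) as [Hu [Hdu [Hw Hdw]]].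
    set (u := fst (F n)) in *. set (w := snd (F n)) in *.
    assert (Hup : ll u p) by (apply (pushupX u q1 p Hu H1)).
    assert (Hpw : ll p w) by (apply (pushdownX p q2 w H2 Hw)).
    assert (Huw : ll u w) by (apply (llX_tr u p w Hup Hpw)).
    destruct pcX as [_ Ht]. destruct (Ht u w Huw) as [g [a [b [Hg [Ha Hb]]]]].
    pose proof (tl_causal g a b Hg) as Hgc. pose proof Hg as [[Hab _] Hmon].
    right. exists (fun s => f (g s)), a, b. split; [|split; [|split]].
    + split. split; [exact Hab|split].
      * apply f_comp_lip; exact Hgc.
      * exists a, b. split; [lra|split; [lra|]]. apply f_ne_ll. apply Hmon; lra.
      * intros s t Hs Hst Ht'. apply llY_le. apply hom_ll. apply Hmon; auto.
    + simpl. rewrite Ha. reflexivity.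
    + simpl. rewrite Hb. reflexivity.
    + intros s Hs. apply HVb. eapply Rlt_trans; [apply (Hloc g a b Hgc)|exact HeV'].
      * rewrite Ha; exact Hup.
      * rewrite Hb; exact Hpw.
      * rewrite Ha. pose proof (dtri d dX u q1 p). pose proof (Rmin_r (/(INR n+1)) (eta/2)). lra.
      * rewrite Hb. pose proof (dtri d dX w q2 p). rewrite (dsym d dX w q2) in H.
        pose proof (Rmin_r (/(INR n+1)) (eta/2)). lra.
      * exact Hs.
  - intros e He. destruct (CONT q1 e He) as [d1 [Hd1' Hc1]]. destruct (arch_inv d1 Hd1') as [N HN].
    exists N. intros n Hn. destruct (HF n) as [Hu [Hdu _]]. rewrite (dsym d' dY). apply Hc1.
    + right; apply llX_le; exact Hu.
    + rewrite (dsym d dX). pose proof (Rmin_l (/(INR n+1)) (eta/2)). pose proof (inv_mono N n Hn). lra.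
  - apply HVb. eapply Rlt_trans; [apply Hcp|exact HeV']. right; exact H1. rewrite (dsym d dX); exact Hd1b.
  - intros e He. destruct (CONT q2 e He) as [d1 [Hd1' Hc1]]. destruct (arch_inv d1 Hd1') as [N HN].
    exists N. intros n Hn. destruct (HF n) as [_ [_ [Hw Hdw]]]. rewrite (dsym d' dY). apply Hc1.
    + left; apply llX_le; exact Hw.
    + pose proof (Rmin_l (/(INR n+1)) (eta/2)). pose proof (inv_mono N n Hn). lra.
  - apply HVb. eapply Rlt_trans; [apply Hcp|exact HeV']. left; exact H2. rewrite (dsym d dX); exact Hd2b.
Qed.

Lemma FCAUSAL x x' : le x x' -> le' (f x) (f x').
Proof.
  intros H. destruct (classic (x = x')) as [E|NE]. { rewrite E. apply leY_refl. }
  destruct pcX as [Hc _]. destruct (Hc x x' (conj H NE)) as [g [a [b [Hg [Ha Hb]]]]].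
  pose proof Hg as [[Hab [[L HL] _]] _].
  rewrite <- Hb.
  assert (Pa : le' (f x) (f (g a))) by (rewrite Ha; apply leY_refl).
  apply (real_ind a b (fun s => le' (f x) (f (g s)))); [lra| |lra].
  intros s Hs IH. destruct (LL (g s)) as [eta [Heta Hll]].
  set (del := eta / (Rabs L + 1)).
  assert (Hdel : 0 < del). { unfold del. apply Rdiv_lt_0_compat; [lra|]. pose proof (Rabs_pos L); lra. }
  destruct (prev_pt a s del _ (proj1 Hs) Hdel Pa IH) as [t [Ht [Hst Pt]]].
  exists del. split; [exact Hdel|]. intros u Hu Hub.
  apply leY_tr with (f (g t)); [exact Pt|].
  pose proof (small_step L eta Heta) as SS. fold del in SS.
  apply Hll.
  - apply (mono_le g a b Hg); lra.
  - apply (mono_le g a b Hg); lra.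
  - eapply Rle_lt_trans; [apply (lip_abs d g a b L HL); lra|].
    rewrite (Rabs_left1 (_ - _)) by lra.
    assert (Rabs L * - (t - s) <= Rabs L * del) by (apply Rmult_le_compat_l; [apply Rabs_pos|lra]). lra.
  - eapply Rle_lt_trans; [apply (lip_abs d g a b L HL); lra|].
    rewrite (Rabs_right (_ - _)) by lra.
    assert (Rabs L * (u - s) <= Rabs L * del) by (apply Rmult_le_compat_l; [apply Rabs_pos|lra]). lra.
Qed.

Lemma main_simple : causally_simple d' le'.
Proof.
  split.
  - intros y1 y2 H12 H21. destruct (surj y1) as [x1 E1]. destruct (surj y2) as [x2 E2]. subst.
    assert (A : forall a b, le' (f a) (f b) -> le a b).
    { intros a b Hab. apply past_incl. intros z Hz. apply llX_le. apply hom_ll.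
      apply (pushupY (f z) (f a) (f b)); [apply hom_ll; exact Hz|exact Hab]. }
    f_equal. apply causalX; apply A; assumption.
  - intro y. destruct (surj y) as [x E]. subst. split.
    + intros yi Hn. destruct (surj yi) as [xi Ei]. subst. apply NNPP. intro Hno. apply Hn.
      apply FCAUSAL. apply past_incl. intros z Hz. apply fut_cl. intros w Hw. apply llX_le.
      destruct (lscY (f xi) (f w) 0) as [e [He L2]]. { apply posY, hom_ll; exact Hw. }
      assert (Hy : exists y', d' (f xi) y' < e /\ le' (f x) y').
      { apply NNPP. intro H. apply Hno. exists e. split; [exact He|]. intros y' Hy' Hle. apply H. eauto. }
      destruct Hy as [y' [Hy' Hle]].
      apply hom_ll. apply llY_tr with y'.
      * apply (pushupY (f z) (f x) y'); [apply hom_ll; exact Hz|exact Hle].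
      * apply posY. apply L2. exact Hy'. rewrite (dxx d' dY). exact He.
    + intros yi Hn. destruct (surj yi) as [xi Ei]. subst. apply NNPP. intro Hno. apply Hn.
      apply FCAUSAL. apply past_incl. intros z Hz. apply fut_cl. intros w Hw. apply llX_le.
      destruct (lscY (f z) (f xi) 0) as [e [He L2]]. { apply posY, hom_ll; exact Hz. }
      assert (Hy : exists y', d' (f xi) y' < e /\ le' y' (f x)).
      { apply NNPP. intro H. apply Hno. exists e. split; [exact He|]. intros y' Hy' Hle. apply H. eauto. }
      destruct Hy as [y' [Hy' Hle]].
      apply hom_ll. apply llY_tr with y'.
      * apply posY. apply L2. rewrite (dxx d' dY). exact He. exact Hy'.
      * apply (pushdownY y' (f x) (f w)); [exact Hle|apply hom_ll; exact Hw].
Qed.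

End Main.

Theorem proposition4p8 (X Y : Type)
    (d : X -> X -> R) (ll le : X -> X -> Prop) (tau : X -> X -> Rbar)
    (d' : Y -> Y -> R) (ll' le' : Y -> Y -> Prop) (tau' : Y -> Y -> Rbar)
    (f : X -> Y) :
  LLS d ll le tau -> LLS d' ll' le' tau' ->
  (forall y, exists x, f x = y) ->
  distance_homothetic tau tau' f ->
  locally_causally_Lipschitz d le d' f ->
  causally_simple d le ->
  locally_compact d' ->
  causally_simple d' le'.
Proof.
  intros [[csX [dX [nnX [lscX [revX [_ posX]]]]]] [pcX [_ [locX _]]]]
         [[csY [dY [nnY [lscY [revY [_ posY]]]]]] [_ [lccY _]]]
         surj [c [cpos hom]] lipf simpX lcY.
  exact (main_simple X Y d ll le tau d' ll' le' tau' f c dX dY csX csY lscX lscY nnX nnY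
           revX revY posX posY pcX locX lccY surj cpos hom lipf simpX lcY).
Qed.
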